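(* Let $\mathcal X$ be a finite multi-set of real symmetric $2\times2$ matrices with nonnegative eigenvalues satisfying the hypotheses of Lemma 7 (unique largest eigenvalue $\lambda_1$; unique second largest eigenvalue $\lambda_2$ whose eigenvector is not perpendicular to that of $\lambda_1$), and let $S=\mathrm{Sup}_{\mathrm{LE}}(\mathcal X)$. Then $S\in\mathcal U_p(\mathcal X)$ for every $p>0$.
   Context: $\mathrm{Sym}(2)$: real symmetric $2\times2$ matrices; $A\le_{\mathrm L}B$ means $B-A$ positive semidefinite; $\mathcal U(\mathcal X):=\{Y\in\mathrm{Sym}(2):X\le_{\mathrm L}Y\ \forall X\in\mathcal X\}$. $\mathrm{Sup}_{\mathrm{LE}}(\mathcal X):=\lim_{m\to\infty}\frac1m\log\sum_{X\in\mathcal X}\exp(mX)$. For a positive semidefinite $Y=\lambda uu^{\mathsf T}+\mu vv^{\mathsf T}$ (spectral form), $Y^p:=\lambda^puu^{\mathsf T}+\mu^pvv^{\mathsf T}$. For $\mathcal X$ with nonnegative eigenvalues, $\mathcal X^p:=\{X^p:X\in\mathcal X\}$ and the $p$-power upper bound cone is $\mathcal U_p(\mathcal X):=\{Y\in\mathrm{Sym}(2)\text{ positive semidefinite}:Y^p\in\mathcal U(\mathcal X^p)\}$. Eigenvalue conventions: the eigenvalues of $\mathcal X$ form the multi-set of both eigenvalues of every matrix; unique means occurring exactly once. *)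

(* Defs.v *)
From HB Require Import structures.
From mathcomp Require Import all_boot all_order all_algebra.
From mathcomp Require Import all_classical all_reals all_analysis.
Set Implicit Arguments. Unset Strict Implicit. Unset Printing Implicit Defensive.
Import Order.TTheory GRing.Theory Num.Theory.
Import numFieldNormedType.Exports.
Local Open Scope classical_set_scope.
Local Open Scope ring_scope.

Section Defs.
Variable R : realType.

Definition sym2 (A : 'M[R]_2) : Prop := A^T = A.

Definition psd (A : 'M[R]_2) : Prop :=
  sym2 A /\ forall v : 'cV[R]_2, 0 <= (v^T *m A *m v) 0 0.

Definition loewner_le (A B : 'M[R]_2) : Prop := psd (B - A).

Definition upper_cone (Xs : seq 'M[R]_2) (Y : 'M[R]_2) : Prop :=
  sym2 Y /\ forall X, X \in Xs -> loewner_le X Y.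

Definition is_spec (Y : 'M[R]_2) (d : R * R * 'cV[R]_2 * 'cV[R]_2) : Prop :=
  let: (l, m, u, v) := d in
  (u^T *m u) 0 0 = 1 /\ (v^T *m v) 0 0 = 1 /\ (u^T *m v) 0 0 = 0 /\
  Y = l *: (u *m u^T) + m *: (v *m v^T).

(* spectral functional calculus f(Y) = f(l) u u^T + f(m) v v^T
   (independent of the chosen spectral form; 0 if Y has none) *)
Definition funcalc (f : R -> R) (Y : 'M[R]_2) : 'M[R]_2 :=
  match pselect (exists d, is_spec Y d) with
  | left h => let: (l, m, u, v) := projT1 (cid h) in
              f l *: (u *m u^T) + f m *: (v *m v^T)
  | right _ => 0
  end.

Definition expm (Y : 'M[R]_2) := funcalc (@expR R) Y.
Definition logm (Y : 'M[R]_2) := funcalc (@ln R) Y.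
Definition powm (Y : 'M[R]_2) (p : R) := funcalc (fun t => powR t p) Y.

Definition upper_cone_p (p : R) (Xs : seq 'M[R]_2) (Y : 'M[R]_2) : Prop :=
  psd Y /\ upper_cone [seq powm X p | X <- Xs] (powm Y p).

Definition supLE_seq (Xs : seq 'M[R]_2) (m : nat) : 'M[R]_2 :=
  m%:R^-1 *: logm (\sum_(X <- Xs) expm (m%:R *: X)).

Definition is_supLE (Xs : seq 'M[R]_2) (S : 'M[R]_2) : Prop :=
  forall i j : 'I_2, (fun m : nat => (supLE_seq Xs m i j : R)) @ \oo --> (S i j : R).

Definition eigmult (Xs : seq 'M[R]_2) (t : R) : nat :=
  (\sum_(X <- Xs) mup t (char_poly X))%N.

Definition is_eig (Xs : seq 'M[R]_2) (t : R) : Prop := (0 < eigmult Xs t)%N.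

Definition lemma7_hyp (Xs : seq 'M[R]_2) : Prop :=
  exists l1 l2 : R,
    eigmult Xs l1 = 1%N /\ (forall t, is_eig Xs t -> t <= l1) /\
    eigmult Xs l2 = 1%N /\ l2 < l1 /\
    (forall t, is_eig Xs t -> t < l1 -> t <= l2) /\
        (forall (X1 X2 : 'M[R]_2) (u v : 'cV[R]_2),
           X1 \in Xs -> X2 \in Xs -> u != 0 -> v != 0 ->
           X1 *m u = l1 *: u -> X2 *m v = l2 *: v ->
           (u^T *m v) 0 0 != 0).

End Defs.

(* Main.v *)
Require Import Defs.
From HB Require Import structures.
From mathcomp Require Import all_boot all_order all_algebra.
From mathcomp Require Import all_classical all_reals all_analysis.
From mathcomp Require Import ring lra.
Import Order.TTheory GRing.Theory Num.Theory.
Local Open Scope ring_scope.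
Import numFieldNormedType.Exports.

Module Lemma8Helpers.
Set Implicit Arguments. Unset Strict Implicit.
Section Aux.
Variable R : realType.
Local Notation M2 := 'M[R]_2.
Local Notation V2 := 'cV[R]_2.

Lemma o_w : @widen_ord 1 2 (leqnSn 1) ord_max = 0 :> 'I_2. Proof. by apply/val_inj. Qed.
Lemma o_l01 : lift 0 (0 : 'I_1) = 1 :> 'I_2. Proof. by apply/val_inj. Qed.
Lemma o_lm0 : lift (ord_max : 'I_2) (0 : 'I_1) = 0 :> 'I_2. Proof. by apply/val_inj. Qed.
Lemma o_m : (ord_max : 'I_2) = 1. Proof. by apply/val_inj. Qed.
Definition oE := (o_w, o_l01, o_lm0, o_m).

Lemma ord2P (i : 'I_2) : i = 0 \/ i = 1.
Proof. case: i => [[|[|n]]] Hi; [left|right|by []]; exact/val_inj. Qed.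

Lemma mat2P (A B : M2) : A 0 0 = B 0 0 -> A 0 1 = B 0 1 -> A 1 0 = B 1 0 -> A 1 1 = B 1 1 -> A = B.
Proof.
move=> h1 h2 h3 h4; apply/matrixP=> i j.
by case: (ord2P i) => ->; case: (ord2P j) => ->.
Qed.

Lemma vec2P (u v : V2) : u 0 0 = v 0 0 -> u 1 0 = v 1 0 -> u = v.
Proof.
move=> h1 h2; apply/matrixP=> i j.
have -> : j = 0 by apply/val_inj; case: j => [[|]].
by case: (ord2P i) => ->.
Qed.

Definition dot (u v : V2) : R := (u^T *m v) 0 0.
Definition qf (A : M2) (x : V2) : R := (x^T *m A *m x) 0 0.

Lemma dotE (u v : V2) : (u^T *m v) 0 0 = u 0 0 * v 0 0 + u 1 0 * v 1 0.
Proof. by rewrite !mxE !big_ord_recr big_ord0 /= !mxE add0r !oE. Qed.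

Lemma mulmxvE (A : M2) (x : V2) i : (A *m x) i 0 = A i 0 * x 0 0 + A i 1 * x 1 0.
Proof. by rewrite !mxE !big_ord_recr big_ord0 /= add0r !oE. Qed.

Lemma qfE (A : M2) (x : V2) : qf A x = x 0 0 * (A 0 0 * x 0 0 + A 0 1 * x 1 0) + x 1 0 * (A 1 0 * x 0 0 + A 1 1 * x 1 0).
Proof.
rewrite /qf -mulmxA dotE !mulmxvE //.
Qed.

Lemma rk1E (u : V2) i j : (u *m u^T) i j = u i 0 * u j 0.
Proof. by rewrite !mxE big_ord1 !mxE. Qed.

Lemma specE (l m : R) (u v : V2) i j :
  (l *: (u *m u^T) + m *: (v *m v^T)) i j = l * (u i 0 * u j 0) + m * (v i 0 * v j 0).
Proof. by rewrite !mxE !big_ord1 !mxE. Qed.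


Lemma frameC (u v : V2) : (u^T*m u) 0 0 = 1 -> (v^T *m v) 0 0 = 1 -> (u^T *m v) 0 0 = 0 ->
  [/\ u 0 0 ^+2 + v 0 0 ^+2 = 1, u 1 0 ^+2 + v 1 0^+2 = 1,
      u 0 0 * u 1 0 + v 0 0 * v 1 0 = 0 & (u 0 0 * v 1 0 - u 1 0 * v 0 0)^+2 = 1].
Proof.
rewrite !dotE; set a := u 0 0; set b := u 1 0; set c := v 0 0; set d := v 1 0.
move=> h1 h2 h3.
have h1' : a^+2 + b^+2 = 1 by rewrite !expr2.
have h2' : c^+2 + d^+2 = 1 by rewrite !expr2.
have e1 := congr1 (fun x => b^+2 * x) h2'.
have e2 := congr1 (fun x => c^+2 * x) h1'.
have e3 := congr1 (fun x => (b*d - a*c) * x) h3.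
have e4 := congr1 (fun x => a^+2 * x) h2'.
have e5 := congr1 (fun x => d^+2 * x) h1'.
have e6 := congr1 (fun x => (a*c - b*d) * x) h3.
have e7 := congr1 (fun x => a*b * x) h2'.
have e8 := congr1 (fun x => c*d * x) h1'.
have e9 := congr1 (fun x => (a*d+b*c) * x) h3.
have e10 := congr1 (fun x => (a*c+b*d) * x) h3.
have e11 := congr1 (fun x => (a^+2+b^+2) * x) h2'.
simpl in *.
split; lra.
Qed.

Lemma frame_compl (u v x : V2) : (u^T*m u) 0 0 = 1 -> (v^T *m v) 0 0 = 1 -> (u^T *m v) 0 0 = 0 ->
  ((u^T *m x) 0 0)^+2 + ((v^T *m x) 0 0)^+2 = x 0 0 ^+ 2 + x 1 0 ^+ 2.
Proof.
move=> h1 h2 h3; have [f1 f2 f3 _] := frameC h1 h2 h3.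
rewrite !dotE.
have e1 := congr1 (fun y => x 0 0 ^+2 * y) f1.
have e2 := congr1 (fun y => x 1 0 ^+2 * y) f2.
have e3 := congr1 (fun y => x 0 0 * x 1 0 * y) f3.
simpl in *; lra.
Qed.

Lemma spec_entry (Y : M2) l m u v i j : is_spec Y (l, m, u, v) ->
  Y i j = l * (u i 0 * u j 0) + m * (v i 0 * v j 0).
Proof. by case=> _ [_ [_ ->]]; rewrite specE. Qed.
Arguments spec_entry {Y l m u v} i j.

Lemma spec_qf (Y : M2) l m u v x : is_spec Y (l, m, u, v) ->
  qf Y x = l * ((u^T *m x) 0 0)^+2 + m * ((v^T *m x) 0 0)^+2.
Proof.
move=> hs; rewrite qfE !(spec_entry _ _ hs) !dotE; ring.
Qed.

Lemma spec_trdet (Y : M2) l m u v : is_spec Y (l, m, u, v) ->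
  Y 0 0 + Y 1 1 = l + m /\ Y 0 0 * Y 1 1 - Y 0 1 * Y 1 0 = l * m.
Proof.
move=> hs; have [h1 [h2 [h3 _]]] := hs.
have [f1 f2 f3 f4] := frameC h1 h2 h3.
rewrite !(spec_entry _ _ hs).
move: f1 f2 f3 f4 (h1) (h2); rewrite !dotE => f1 f2 f3 f4 g1 g2.
set a := u 0 0 in f1 f2 f3 f4 g1 g2 *; set b := u 1 0 in f1 f2 f3 f4 g1 g2 *.
set c := v 0 0 in f1 f2 f3 f4 g1 g2 *; set d := v 1 0 in f1 f2 f3 f4 g1 g2 *.
split.
  have e1 := congr1 (fun y => l * y) g1.
  have e2 := congr1 (fun y => m * y) g2.
  simpl in *; lra.
have e := congr1 (fun y => l * m * y) f4.
simpl in *; lra.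
Qed.
Arguments spec_trdet {Y l m u v}.

Lemma cp2 (A : M2) (t : R) :
  (char_poly A).[t] = (t - A 0 0) * (t - A 1 1) - A 0 1 * A 1 0.
Proof.
rewrite /char_poly (expand_det_row _ 0) !big_ord_recr big_ord0 /= add0r.
rewrite /cofactor !det_mx11 !mxE /= !hornerE /=.
have h1 : @widen_ord 1 2 (leqnSn 1) ord_max = 0 :> 'I_2 by apply/val_inj.
have h2 : lift 0 (0 : 'I_1) = 1 :> 'I_2 by apply/val_inj.
have h3 : lift (ord_max : 'I_2) (0 : 'I_1) = 0 :> 'I_2 by apply/val_inj.
have h4 : (ord_max : 'I_2) = 1 by apply/val_inj.
rewrite h1 h2 h3 h4; ring.
Qed.

Lemma spec_root (Y : M2) l m u v t : is_spec Y (l, m, u, v) ->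
  root (char_poly Y) t = (t == l) || (t == m).
Proof.
move=> hs; have [e1 e2] := spec_trdet hs.
rewrite /root cp2.
have -> : (t - Y 0 0) * (t - Y 1 1) - Y 0 1 * Y 1 0 = (t - l) * (t - m).
  have -> : (t - Y 0 0) * (t - Y 1 1) - Y 0 1 * Y 1 0 =
     t^+2 - (Y 0 0 + Y 1 1) * t + (Y 0 0 * Y 1 1 - Y 0 1 * Y 1 0) by ring.
  rewrite e1 e2; ring.
by rewrite mulf_eq0 !subr_eq0.
Qed.
Arguments spec_root {Y l m u v}.

Lemma spp_eq (l m l' m' : R) : l + m = l' + m' -> l * m = l' * m' ->
  (l = l' /\ m = m') \/ (l = m' /\ m = l').
Proof.
move=> h1 h2.
have : (l - l') * (l - m') = 0.
  have -> : (l - l') * (l - m') = l^+2 - l * (l' + m') + l' * m' by ring.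
  rewrite -h1 -h2; ring.
move/eqP; rewrite mulf_eq0 !subr_eq0 => /orP[/eqP e|/eqP e].
  by left; split => //; move: h1; rewrite e => /addrI.
by right; split => //; move: h1; rewrite e addrC => /addIr.
Qed.

Lemma ent_uniq (f : R -> R) (l m l' m' P Q P' Q' y dl : R) :
  y = l*P + m*Q -> dl = P + Q -> y = l'*P' + m'*Q' -> dl = P' + Q' ->
  (l = l' /\ m = m') \/ (l = m' /\ m = l') ->
  f l * P + f m * Q = f l' * P' + f m' * Q'.
Proof.
move=> hy hd hy' hd' hp.
have [elm|nlm] := eqVneq l m.
  case: hp => [[e1 e2]|[e1 e2]].
  - by rewrite -e1 -e2 -elm -!mulrDr -hd hd'.
  - by rewrite -e1 -e2 -elm -!mulrDr -hd hd'.
have nz : l - m != 0 by rewrite subr_eq0.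
case: hp => [[e1 e2]|[e1 e2]]; rewrite -e1 -e2 in hy' *.
  have eP : P = P'.
    apply: (mulfI nz).
    have -> : (l - m) * P = y - m * dl by rewrite hy hd; ring.
    rewrite hy' hd'; ring.
  have eQ : Q = Q' by move: hd; rewrite hd' eP => /addrI.
  by rewrite eP eQ.
have eP : P = Q'.
  apply: (mulfI nz).
  have -> : (l - m) * P = y - m * dl by rewrite hy hd; ring.
  rewrite hy' hd'; ring.
have eQ : Q = P' by move: hd; rewrite hd' eP addrC => /addrI.
rewrite eP eQ; ring.
Qed.

End Aux.

Section Aux2.
Variable R : realType.
Local Notation M2 := 'M[R]_2.
Local Notation V2 := 'cV[R]_2.

Lemma frame_id (u v : V2) i j : (u^T*m u) 0 0 = 1 -> (v^T *m v) 0 0 = 1 -> (u^T *m v) 0 0 = 0 ->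
  (1%:M : M2) i j = u i 0 * u j 0 + v i 0 * v j 0.
Proof.
move=> h1 h2 h3; have [f1 f2 f3 _] := frameC h1 h2 h3.
rewrite mxE; move: f1 f2 f3; rewrite !expr2 => f1 f2 f3.
case: (ord2P i) => ->; case: (ord2P j) => -> /=; rewrite ?f1 ?f2 ?f3 //.
by rewrite mulrC [v 1 0 * _]mulrC f3.
Qed.

Lemma funcalc_spec (f : R -> R) (Y : M2) l m u v : is_spec Y (l, m, u, v) ->
  funcalc f Y = f l *: (u *m u^T) + f m *: (v *m v^T).
Proof.
move=> hs; rewrite /funcalc; case: pselect => [h|nh]; last first.
  by exfalso; apply: nh; exists (l, m, u, v).
case: (cid h) => -[[[l' m'] u'] v'] hs' /=.
have [t1 d1] := spec_trdet hs; have [t2 d2] := spec_trdet hs'.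
have hp := spp_eq (etrans (esym t1) t2) (etrans (esym d1) d2).
have [g1 [g2 [g3 _]]] := hs; have [g1' [g2' [g3' _]]] := hs'.
apply/matrixP => i j; rewrite !specE; symmetry.
apply: (ent_uniq f (spec_entry i j hs) (frame_id i j g1 g2 g3)
                   (spec_entry i j hs') (frame_id i j g1' g2' g3') hp).
Qed.

Definition vec2 (x y : R) : V2 := \col_(i < 2) (if i == 0 then x else y).
Lemma vec2_0 x y : vec2 x y 0 0 = x. Proof. by rewrite mxE. Qed.
Lemma vec2_1 x y : vec2 x y 1 0 = y. Proof. by rewrite mxE. Qed.
Definition vec2E := (vec2_0, vec2_1).

Lemma spec_exists (Y : M2) : Y 0 1 = Y 1 0 -> exists d, is_spec Y d.
Proof.
move=> hsym.
have [b0|bn0] := eqVneq (Y 0 1) 0.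
  exists (Y 0 0, Y 1 1, vec2 1 0, vec2 0 1); split; [|split; [|split]].
  - by rewrite dotE !vec2E; ring.
  - by rewrite dotE !vec2E; ring.
  - by rewrite dotE !vec2E; ring.
  apply: mat2P; rewrite !specE !vec2E; rewrite -?hsym ?b0; ring.
set a := Y 0 0 in hsym *; set b := Y 0 1 in hsym bn0 *; set c := Y 1 1.
have hpos : 0 <= (a - c)^+2 + 4 * b^+2 by have := sqr_ge0 (a - c); have := sqr_ge0 b; lra.
set r := Num.sqrt ((a - c)^+2 + 4 * b^+2).
have hr : r^+2 = (a - c)^+2 + 4 * b^+2 by rewrite sqr_sqrtr.
set l := (a + c + r) / 2.
have hkey : (l - a) * (l - c) = b^+2 by rewrite /l; lra.
have hb2 : 0 < b^+2 by rewrite lt_neqAle eq_sym sqrf_eq0 bn0 sqr_ge0.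
set N := b^+2 + (l - a)^+2.
have hN : 0 < N by rewrite /N; have := sqr_ge0 (l - a); lra.
set ni := (Num.sqrt N)^-1.
have hni : ni^+2 * N = 1 by rewrite /ni exprVn sqr_sqrtr ?(ltW hN) // mulVf // gt_eqF.
exists (l, a + c - l, vec2 (b * ni) ((l - a) * ni), vec2 (- ((l - a) * ni)) (b * ni)).
split; [|split; [|split]].
- rewrite dotE !vec2E; rewrite /N in hni; lra.
- rewrite dotE !vec2E; rewrite /N in hni; lra.
- rewrite dotE !vec2E; ring.
rewrite /N in hni.
have e1 := congr1 (fun x => a * x) hni.
have e2 := congr1 (fun x => ni^+2 * (l - a) * x) hkey.
have e3 := congr1 (fun x => b * ni^+2 * x) hkey.
have e4 := congr1 (fun x => b * x) hni.
have e6 := congr1 (fun x => c * x) hni.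
simpl in *.
apply: mat2P; rewrite !specE !vec2E -?hsym; try rewrite -/a; try rewrite -/b; try rewrite -/c; lra.
Qed.

Lemma spec_scale (Y : M2) k l m u v : is_spec Y (l, m, u, v) ->
  is_spec (k *: Y) (k * l, k * m, u, v).
Proof.
case=> h1 [h2 [h3 ->]]; do 3!split => //.
by rewrite scalerDr !scalerA.
Qed.

Lemma funcalc_sym (f : R -> R) (Y : M2) : funcalc f Y 0 1 = funcalc f Y 1 0.
Proof.
rewrite /funcalc; case: pselect => [h|nh]; last by rewrite !mxE.
case: (cid h) => -[[[l' m'] u'] v'] hs' /=.
rewrite !specE; ring.
Qed.

Lemma qf0 (x : V2) : qf 0 x = 0.
Proof. by rewrite qfE !mxE; ring. Qed.

Lemma qfD (A B : M2) x : qf (A + B) x = qf A x + qf B x.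
Proof. by rewrite !qfE !mxE; ring. Qed.

Lemma qf_sum (s : seq M2) (F : M2 -> M2) x :
  qf (\sum_(X <- s) F X) x = \sum_(X <- s) qf (F X) x.
Proof.
elim: s => [|X s IH]; first by rewrite !big_nil qf0.
by rewrite !big_cons qfD IH.
Qed.

Lemma qfZ (A : M2) k x : qf (k *: A) x = k * qf A x.
Proof. by rewrite !qfE !mxE; ring. Qed.

Lemma eig_in (Xs : seq M2) X t : X \in Xs -> root (char_poly X) t -> is_eig Xs t.
Proof.
move=> hX hr; rewrite /is_eig /eigmult (big_rem X) //=.
have hnz : char_poly X != 0 := monic_neq0 (char_poly_monic X).
have : (0 < mup t (char_poly X))%N by rewrite -XsubC_dvd // dvdp_XsubCl.
by move=> h; apply: (leq_trans h); rewrite leq_addr.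
Qed.

Lemma eig_ex (Xs : seq M2) t : is_eig Xs t -> exists2 X, X \in Xs & root (char_poly X) t.
Proof.
elim: Xs => [|X s IH]; rewrite /is_eig /eigmult ?big_nil ?big_cons //.
move=> h; case: (posnP (mup t (char_poly X))) => [e|p].
  rewrite e add0n in h; have [Y hY hr] := IH h.
  by exists Y => //; rewrite inE hY orbT.
exists X; first by rewrite inE eqxx.
have hnz : char_poly X != 0 := monic_neq0 (char_poly_monic X).
by rewrite -dvdp_XsubCl XsubC_dvd.
Qed.

End Aux2.

Section Aux3.
Variable R : realType.
Local Open Scope classical_set_scope.
Local Open Scope ring_scope.
Local Notation M2 := 'M[R]_2.
Local Notation V2 := 'cV[R]_2.

Lemma lim_lb (f : nat -> R) (l c K : R) : f @ \oo --> l ->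
  (forall m, (0 < m)%N -> c + K / m%:R <= f m) -> c <= l.
Proof.
move=> hf hb; apply/ler_addgt0Pr => e e0.
rewrite -lerBlDr.
apply: (cvgr_to_ge hf).
have hn : 0 <= `|K| / e by rewrite divr_ge0 // ltW.
have hN := archi_boundP hn.
exists (Num.bound (`|K| / e)).+1 => // m /= hm.
have m0 : (0 < m)%N by apply: leq_trans hm.
apply: le_trans (hb m m0).
have mR : 0 < m%:R :> R by rewrite ltr0n.
have hNm : (Num.bound (`|K| / e))%:R <= m%:R :> R.
  by rewrite ler_nat; apply: ltnW.
have h1 : `|K| / e < m%:R by apply: lt_le_trans hN hNm.
rewrite ltr_pdivrMr // in h1.
have h2 : - e <= K / m%:R.
  rewrite ler_pdivlMr //.
  have := ler_norm (- K); rewrite normrN.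
  lra.
lra.
Qed.

Lemma lim_ub (f : nat -> R) (l c K : R) : f @ \oo --> l ->
  (forall m, (0 < m)%N -> f m <= c + K / m%:R) -> l <= c.
Proof.
move=> hf hb.
have hf' : (fun m => - f m) @ \oo --> - l by apply: cvgN.
have := @lim_lb (fun m => - f m) (- l) (- c) (- K) hf'.
rewrite lerN2; apply => m hm.
have := hb m hm; rewrite mulNr; lra.
Qed.

Definition Mm (Xs : seq M2) (m : nat) : M2 := \sum_(X <- Xs) expm (m%:R *: X).

Lemma Mm_sym (Xs : seq M2) m : Mm Xs m 0 1 = Mm Xs m 1 0.
Proof.
rewrite /Mm !summxE; apply: eq_bigr => X _; exact: funcalc_sym.
Qed.

Lemma dotC (u v : V2) : (u^T *m v) 0 0 = (v^T *m u) 0 0.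
Proof. by rewrite !dotE mulrC [u 1 0 * _]mulrC. Qed.

Lemma spec_f (f : R -> R) (Y : M2) l m u v : is_spec Y (l, m, u, v) ->
  is_spec (funcalc f Y) (f l, f m, u, v).
Proof.
move=> hs; rewrite (funcalc_spec f hs).
by case: hs => h1 [h2 [h3 _]].
Qed.

Lemma unit_of (e : V2) : (e^T *m e) 0 0 = 1 -> e 0 0 ^+ 2 + e 1 0 ^+ 2 = 1.
Proof. by rewrite dotE !expr2. Qed.

Lemma supLE_decomp (Xs : seq M2) m : exists l1 l2 (e1 e2 : V2),
  [/\ is_spec (Mm Xs m) (l1, l2, e1, e2),
      forall x, qf (supLE_seq Xs m) x =
        m%:R^-1 * (ln l1 * ((e1^T *m x) 0 0)^+2 + ln l2 * ((e2^T *m x) 0 0)^+2),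
      l1 = qf (Mm Xs m) e1 & l2 = qf (Mm Xs m) e2].
Proof.
have [[[[l1 l2] e1] e2] hs] := spec_exists (Mm_sym Xs m).
exists l1, l2, e1, e2; split => //.
- move=> x; rewrite /supLE_seq qfZ; congr (_ * _).
  exact: (spec_qf x (spec_f (@ln R) hs)).
- case: (hs) => h1 [h2 [h3 _]].
  rewrite (spec_qf _ hs) h1 (dotC e2) h3; ring.
- case: (hs) => h1 [h2 [h3 _]].
  rewrite (spec_qf _ hs) h2 h3; ring.
Qed.

Lemma qf_lim (Xs : seq M2) (S : M2) (x : V2) : is_supLE Xs S ->
  (fun m => qf (supLE_seq Xs m) x) @ \oo --> qf S x.
Proof.
move=> h.
have -> : (fun m => qf (supLE_seq Xs m) x) =
  (fun m => x 0 0 * (supLE_seq Xs m 0 0 * x 0 0 + supLE_seq Xs m 0 1 * x 1 0) +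
            x 1 0 * (supLE_seq Xs m 1 0 * x 0 0 + supLE_seq Xs m 1 1 * x 1 0)).
  by apply: funext => m; rewrite qfE.
rewrite qfE.
apply: cvgD; apply: cvgMl_tmp; apply: cvgD; apply: cvgMr_tmp; exact: h.
Qed.

Lemma ln_pos_le (A B : R) : 0 < A -> A <= B -> ln A <= ln B.
Proof.
move=> hA hAB; have hB : 0 < B by apply: lt_le_trans hAB.
by rewrite ler_ln ?posrE.
Qed.

Lemma ln_Kexp (K t : R) : 0 < K -> ln (K * expR t) = ln K + t.
Proof. by move=> hK; rewrite lnM ?posrE ?expR_gt0 // expRK. Qed.

Lemma core_lb (Xs : seq M2) (S : M2) (K c : R) (x : V2) : is_supLE Xs S -> 0 < K ->
  (forall m, (0 < m)%N -> forall e : V2, e 0 0 ^+ 2 + e 1 0 ^+ 2 = 1 ->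
     K * expR (m%:R * c) <= qf (Mm Xs m) e) ->
  c * (x 0 0 ^+ 2 + x 1 0 ^+ 2) <= qf S x.
Proof.
move=> hS hK hb.
apply: (lim_lb (K := ln K * (x 0 0 ^+ 2 + x 1 0 ^+ 2)) (qf_lim (x:=x) hS)) => m m0.
have [l1 [l2 [e1 [e2 [hs hq el1 el2]]]]] := supLE_decomp Xs m.
rewrite hq.
case: (hs) => h1 [h2 [h3 _]].
have hc := frame_compl x h1 h2 h3.
have mR : 0 < m%:R :> R by rewrite ltr0n.
have b1 : ln K + m%:R * c <= ln l1.
  rewrite -ln_Kexp // el1; apply: ln_pos_le; first by rewrite mulr_gt0 ?expR_gt0.
  exact: hb m m0 e1 (unit_of h1).
have b2 : ln K + m%:R * c <= ln l2.
  rewrite -ln_Kexp // el2; apply: ln_pos_le; first by rewrite mulr_gt0 ?expR_gt0.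
  exact: hb m m0 e2 (unit_of h2).
set c1 := ((e1^T *m x) 0 0)^+2 in hc *; set c2 := ((e2^T *m x) 0 0)^+2 in hc *.
have c1p : 0 <= c1 by rewrite sqr_ge0.
have c2p : 0 <= c2 by rewrite sqr_ge0.
have t1 : (ln K + m%:R * c) * c1 <= ln l1 * c1 by rewrite ler_wpM2r.
have t2 : (ln K + m%:R * c) * c2 <= ln l2 * c2 by rewrite ler_wpM2r.
have -> : c * (x 0 0 ^+ 2 + x 1 0 ^+ 2) + ln K * (x 0 0 ^+ 2 + x 1 0 ^+ 2) / m%:R =
   m%:R^-1 * ((ln K + m%:R * c) * c1 + (ln K + m%:R * c) * c2).
  rewrite -mulrDr hc; field; by rewrite gt_eqF.
rewrite ler_pM2l ?invr_gt0 //; lra.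
Qed.

Lemma core_ub (Xs : seq M2) (S : M2) (K c : R) (x : V2) : is_supLE Xs S -> 0 < K ->
  (forall m, (0 < m)%N -> forall e : V2, e 0 0 ^+ 2 + e 1 0 ^+ 2 = 1 ->
     0 < qf (Mm Xs m) e /\ qf (Mm Xs m) e <= K * expR (m%:R * c)) ->
  qf S x <= c * (x 0 0 ^+ 2 + x 1 0 ^+ 2).
Proof.
move=> hS hK hb.
apply: (lim_ub (K := ln K * (x 0 0 ^+ 2 + x 1 0 ^+ 2)) (qf_lim (x:=x) hS)) => m m0.
have [l1 [l2 [e1 [e2 [hs hq el1 el2]]]]] := supLE_decomp Xs m.
rewrite hq.
case: (hs) => h1 [h2 [h3 _]].
have hc := frame_compl x h1 h2 h3.
have mR : 0 < m%:R :> R by rewrite ltr0n.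
have b1 : ln l1 <= ln K + m%:R * c.
  have [p q] := hb m m0 e1 (unit_of h1).
  rewrite -ln_Kexp // el1; exact: ln_pos_le.
have b2 : ln l2 <= ln K + m%:R * c.
  have [p q] := hb m m0 e2 (unit_of h2).
  rewrite -ln_Kexp // el2; exact: ln_pos_le.
set c1 := ((e1^T *m x) 0 0)^+2 in hc *; set c2 := ((e2^T *m x) 0 0)^+2 in hc *.
have c1p : 0 <= c1 by rewrite sqr_ge0.
have c2p : 0 <= c2 by rewrite sqr_ge0.
have t1 : ln l1 * c1 <= (ln K + m%:R * c) * c1 by rewrite ler_wpM2r.
have t2 : ln l2 * c2 <= (ln K + m%:R * c) * c2 by rewrite ler_wpM2r.
have -> : c * (x 0 0 ^+ 2 + x 1 0 ^+ 2) + ln K * (x 0 0 ^+ 2 + x 1 0 ^+ 2) / m%:R =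
   m%:R^-1 * ((ln K + m%:R * c) * c1 + (ln K + m%:R * c) * c2).
  rewrite -mulrDr hc; field; by rewrite gt_eqF.
rewrite ler_pM2l ?invr_gt0 //; lra.
Qed.

Lemma clnc (c : R) : 0 < c -> c - 1 <= c * ln c.
Proof.
move=> hc.
have h : -1 < c^-1 - 1 by rewrite ltrBrDl subrr invr_gt0.
have := le_ln1Dx h; rewrite addrC subrK lnV ?posrE // => h2.
have : c * (- ln c) <= c * (c^-1 - 1) by rewrite ler_pM2l.
rewrite mulrBr mulfV ?gt_eqF //; lra.
Qed.

Lemma term_lb (mu ci t : R) : 0 <= ci -> (0 < ci -> 0 < mu /\ expR t * ci <= mu) ->
  ci * t - 1 <= ci * ln mu.
Proof.
move=> c0 h.
have [ce|cp] := eqVneq ci 0.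
  by rewrite ce !mul0r; lra.
have cpos : 0 < ci by rewrite lt_neqAle eq_sym cp.
have [mp hm] := h cpos.
have : ln (ci * expR t) <= ln mu by apply: ln_pos_le; [rewrite mulr_gt0 ?expR_gt0 | rewrite mulrC].
rewrite ln_Kexp // => hl.
have := clnc cpos.
have : ci * (ln ci + t) <= ci * ln mu by rewrite ler_pM2l.
lra.
Qed.

Lemma core_top (Xs : seq M2) (S : M2) (L : R) (u : V2) : is_supLE Xs S -> (u^T *m u) 0 0 = 1 ->
  (forall m, (0 < m)%N -> forall e : V2,
     expR (m%:R * L) * ((u^T *m e) 0 0)^+2 <= qf (Mm Xs m) e) ->
  (forall m, (0 < m)%N -> forall e : V2, e 0 0 ^+ 2 + e 1 0 ^+ 2 = 1 ->
     0 < qf (Mm Xs m) e) ->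
  L <= qf S u.
Proof.
move=> hS hu hb hp.
apply: (lim_lb (K := -2) (qf_lim (x:=u) hS)) => m m0.
have [l1 [l2 [e1 [e2 [hs hq el1 el2]]]]] := supLE_decomp Xs m.
rewrite hq.
case: (hs) => h1 [h2 [h3 _]].
have hc := frame_compl u h1 h2 h3.
have mR : 0 < m%:R :> R by rewrite ltr0n.
set c1 := ((e1^T *m u) 0 0)^+2 in hc *; set c2 := ((e2^T *m u) 0 0)^+2 in hc *.
have hc1 : c1 + c2 = 1 by rewrite hc; exact: unit_of hu.
have t1 : c1 * (m%:R * L) - 1 <= c1 * ln l1.
  apply: term_lb; first by rewrite sqr_ge0.
  move=> _; split; first by rewrite el1; exact: hp m m0 e1 (unit_of h1).
  by rewrite el1 /c1 dotC; apply: hb.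
have t2 : c2 * (m%:R * L) - 1 <= c2 * ln l2.
  apply: term_lb; first by rewrite sqr_ge0.
  move=> _; split; first by rewrite el2; exact: hp m m0 e2 (unit_of h2).
  by rewrite el2 /c2 dotC; apply: hb.
rewrite (_ : L + -2 / m%:R = m%:R^-1 * ((c1 * (m%:R * L) - 1) + (c2 * (m%:R * L) - 1))); last first.
  have -> : (c1 * (m%:R * L) - 1) + (c2 * (m%:R * L) - 1) = (c1 + c2) * (m%:R * L) - 2 by ring.
  rewrite hc1; field; by rewrite gt_eqF.
rewrite ler_pM2l ?invr_gt0 //; lra.
Qed.

End Aux3.

Section Aux4.
Variable R : realType.
Local Open Scope classical_set_scope.
Local Open Scope ring_scope.
Local Notation M2 := 'M[R]_2.
Local Notation V2 := 'cV[R]_2.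

Definition Dt (u w : V2) : R := u 0 0 * w 1 0 - u 1 0 * w 0 0.

Lemma nonpar (u y e : V2) : (u^T *m u) 0 0 = 1 -> (y^T *m y) 0 0 = 1 ->
  e 0 0 ^+ 2 + e 1 0 ^+ 2 = 1 ->
  (Dt u y)^+2 / 2 <= ((u^T *m e) 0 0)^+2 + ((y^T *m e) 0 0)^+2.
Proof.
rewrite !dotE /Dt => hu hy he.
set p := u 0 0 * e 0 0 + u 1 0 * e 1 0.
set q := y 0 0 * e 0 0 + y 1 0 * e 1 0.
have f1 := congr1 (fun t => (u 0 0 * y 1 0 - u 1 0 * y 0 0)^+2 * t) he.
have f2 := sqr_ge0 (y 1 0 * p + u 1 0 * q).
have f3 := sqr_ge0 (y 0 0 * p + u 0 0 * q).
have f4 := congr1 (fun t => p^+2 * t) hy.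
have f5 := congr1 (fun t => q^+2 * t) hu.
simpl in *; rewrite /p /q in f2 f3 f4 f5 *.
lra.
Qed.

Lemma par_sq (u w x : V2) : (u^T *m u) 0 0 = 1 -> (w^T *m w) 0 0 = 1 -> Dt u w = 0 ->
  ((w^T *m x) 0 0)^+2 = ((u^T *m x) 0 0)^+2.
Proof.
move=> hu hw hD.
have e1 : (w^T *m x) 0 0 = (u^T *m w) 0 0 * (u^T *m x) 0 0.
  move: hu hD; rewrite !dotE /Dt => hu hD.
  have f1 := congr1 (fun t => t * (u 0 0 * x 1 0 - u 1 0 * x 0 0)) hD.
  have f2 := congr1 (fun t => t * (w 0 0 * x 0 0 + w 1 0 * x 1 0)) hu.
  simpl in *; lra.
have e2 : ((u^T *m w) 0 0)^+2 = 1.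
  move: hu hw hD; rewrite !dotE /Dt => hu hw hD.
  have f1 := congr1 (fun t => t * t) hD.
  have f2 := congr1 (fun t => t * (w 0 0 ^+ 2 + w 1 0 ^+2)) hu.
  simpl in *; rewrite !expr2 in f2 *; lra.
by rewrite e1 exprMn e2 mul1r.
Qed.

Lemma par_perp (u w z : V2) : (u^T *m u) 0 0 = 1 -> (w^T *m w) 0 0 = 1 ->
  (z^T *m z) 0 0 = 1 -> (w^T *m z) 0 0 = 0 -> Dt u w = 0 -> (Dt u z)^+2 = 1.
Proof.
move=> hu hw hz hwz hD.
have e1 : (u^T *m z) 0 0 = 0.
  move: hw hwz hD; rewrite !dotE /Dt => hw hwz hD.
  have f1 := congr1 (fun t => t * (w 0 0 * z 1 0 - w 1 0 * z 0 0)) hD.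
  have f2 := congr1 (fun t => t * (u 0 0 * z 0 0 + u 1 0 * z 1 0)) hw.
  have f3 := congr1 (fun t => t * (w 0 0 * u 0 0 + w 1 0 * u 1 0)) hwz.
  simpl in *; lra.
move: hu hz e1; rewrite !dotE /Dt => hu hz e1.
have f1 := congr1 (fun t => t * t) e1.
have f2 := congr1 (fun t => t * (z 0 0 * z 0 0 + z 1 0 * z 1 0)) hu.
simpl in *; rewrite !expr2; lra.
Qed.

Lemma powle (a b p : R) : 0 <= p -> 0 <= a -> a <= b -> a `^ p <= b `^ p.
Proof.
move=> hp ha hab; apply: (ge0_ler_powR hp) => //; rewrite nnegrE //.
exact: le_trans hab.
Qed.

Lemma final_cmp (u v w z x : V2) (L k al be p : R) :
  (u^T *m u) 0 0 = 1 -> (v^T *m v) 0 0 = 1 -> (u^T *m v) 0 0 = 0 ->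
  (w^T *m w) 0 0 = 1 -> (z^T *m z) 0 0 = 1 -> (w^T *m z) 0 0 = 0 ->
  0 <= al -> al <= L -> 0 <= be -> be <= L -> 0 <= k -> k <= L -> 0 < p ->
  (Dt u w != 0 -> al <= k) -> (Dt u z != 0 -> be <= k) ->
  al `^ p * ((w^T *m x) 0 0)^+2 + be `^ p * ((z^T *m x) 0 0)^+2 <=
  L `^ p * ((u^T *m x) 0 0)^+2 + k `^ p * ((v^T *m x) 0 0)^+2.
Proof.
move=> hu hv huv hw hz hwz a0 aL b0 bL k0 kL p0 hA hB.
have hp := ltW p0.
have c1 := frame_compl x hu hv huv.
have c2 := frame_compl x hw hz hwz.
set U := ((u^T *m x) 0 0)^+2 in c1 *; set V := ((v^T *m x) 0 0)^+2 in c1 *.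
set W := ((w^T *m x) 0 0)^+2 in c2 *; set Z := ((z^T *m x) 0 0)^+2 in c2 *.
have U0 : 0 <= U by rewrite sqr_ge0.
have V0 : 0 <= V by rewrite sqr_ge0.
have W0 : 0 <= W by rewrite sqr_ge0.
have Z0 : 0 <= Z by rewrite sqr_ge0.
have kpL : k `^ p <= L `^ p by apply: powle.
have [Dw|Dw] := eqVneq (Dt u w) 0.
  have eW : W = U by rewrite /W /U; apply: par_sq.
  have eZ : Z = V by move: c1 c2; rewrite eW; lra.
  have Dz : Dt u z != 0.
    by apply/eqP => h; have := par_perp hu hw hz hwz Dw; rewrite h expr2 mul0r => /eqP; rewrite eq_sym oner_eq0.
  have t1 : al `^ p * W <= L `^ p * U by rewrite eW ler_wpM2r // powle.
  have t2 : be `^ p * Z <= k `^ p * V by rewrite eZ ler_wpM2r // powle // hB.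
  lra.
have [Dz|Dz] := eqVneq (Dt u z) 0.
  have eZ : Z = U by rewrite /Z /U; apply: par_sq.
  have eW : W = V by move: c1 c2; rewrite eZ; lra.
  have dwz : (z^T *m w) 0 0 = 0 by rewrite dotC.
  have t1 : be `^ p * Z <= L `^ p * U by rewrite eZ ler_wpM2r // powle.
  have t2 : al `^ p * W <= k `^ p * V by rewrite eW ler_wpM2r // powle // hA.
  lra.
have t1 : al `^ p * W <= k `^ p * W by rewrite ler_wpM2r // powle // hA.
have t2 : be `^ p * Z <= k `^ p * Z by rewrite ler_wpM2r // powle // hB.
have t3 : k `^ p * U <= L `^ p * U by rewrite ler_wpM2r.
have e : k `^ p * W + k `^ p * Z = k `^ p * U + k `^ p * V by rewrite -!mulrDr c2 c1.
lra.
Qed.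

End Aux4.

Section Aux5.
Variable R : realType.
Local Open Scope classical_set_scope.
Local Open Scope ring_scope.
Local Notation M2 := 'M[R]_2.
Local Notation V2 := 'cV[R]_2.

Lemma spec_swap (Y : M2) l m u v : is_spec Y (l, m, u, v) -> is_spec Y (m, l, v, u).
Proof.
case=> h1 [h2 [h3 ->]]; split => //; split => //; split; first by rewrite dotC.
by rewrite addrC.
Qed.

Lemma exp_qf (X : M2) al be w z (k : R) (e : V2) : is_spec X (al, be, w, z) ->
  qf (expm (k *: X)) e = expR (k * al) * ((w^T *m e) 0 0)^+2 + expR (k * be) * ((z^T *m e) 0 0)^+2.
Proof.
move=> hs; have hs2 := spec_f (@expR R) (spec_scale k hs).
exact: (spec_qf e hs2).
Qed.

Lemma sum_le_const (s : seq M2) (F : M2 -> R) C : (forall X, X \in s -> F X <= C) ->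
  \sum_(X <- s) F X <= (size s)%:R * C.
Proof.
elim: s => [|Y s IH] h; first by rewrite big_nil mul0r.
rewrite big_cons /= -[(size s).+1]addn1 natrD mulrDl mul1r addrC.
apply: lerD; first by apply: IH => X hX; apply: h; rewrite inE hX orbT.
by apply: h; rewrite inE eqxx.
Qed.

Lemma sum_ge_one (s : seq M2) (F : M2 -> R) X0 : X0 \in s ->
  (forall X, X \in s -> 0 <= F X) -> F X0 <= \sum_(X <- s) F X.
Proof.
move=> h0 hF; rewrite (big_rem X0) //= lerDl big_seq.
by apply: sumr_ge0 => X hX; apply: hF; exact: mem_rem hX.
Qed.

Lemma sum_ge_two (s : seq M2) (F : M2 -> R) X0 X' : X0 \in s -> X' \in s -> X' != X0 ->
  (forall X, X \in s -> 0 <= F X) -> F X0 + F X' <= \sum_(X <- s) F X.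
Proof.
move=> h0 h' hne hF; rewrite (big_rem X0) //= lerD2l.
have h'' : X' \in rem X0 s by apply: rem_mem.
rewrite (big_rem X') //= lerDl big_seq.
by apply: sumr_ge0 => X hX; apply: hF; apply: mem_rem (mem_rem hX).
Qed.

Definition bil (S : M2) (u v : V2) : R :=
  u 0 0 * (S 0 0 * v 0 0 + S 0 1 * v 1 0) + u 1 0 * (S 1 0 * v 0 0 + S 1 1 * v 1 0).

Lemma qf_shift (S : M2) (u v : V2) t : S 0 1 = S 1 0 ->
  qf S (u + t *: v) = qf S u + 2 * t * bil S u v + t^+2 * qf S v.
Proof. by move=> hs; rewrite !qfE /bil !mxE hs; ring. Qed.

Lemma norm_shift (u v : V2) t : (u^T*m u) 0 0 = 1 -> (v^T *m v) 0 0 = 1 -> (u^T *m v) 0 0 = 0 ->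
  (u + t *: v) 0 0 ^+ 2 + (u + t *: v) 1 0 ^+ 2 = 1 + t^+2.
Proof.
rewrite !dotE !mxE => h1 h2 h3.
have f1 := congr1 (fun y => t * y) h3.
have f2 := congr1 (fun y => t^+2 * y) h2.
simpl in *; rewrite !expr2 in f2 *; lra.
Qed.

Lemma bil0 (S : M2) (L : R) (u v : V2) :
  (u^T*m u) 0 0 = 1 -> (v^T *m v) 0 0 = 1 -> (u^T *m v) 0 0 = 0 -> S 0 1 = S 1 0 ->
  (forall x : V2, qf S x <= L * (x 0 0 ^+ 2 + x 1 0 ^+ 2)) -> L <= qf S u ->
  bil S u v = 0.
Proof.
move=> hu hv huv hs hP hL.
set B := bil S u v; set k := qf S v.
set d := `|L - k| + 1.
have d0 : 0 < d by rewrite /d ltr_pwDr // normr_ge0.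
set t := B / d.
have hB : B = t * d by rewrite /t mulrVK // unitfE gt_eqF.
have H := hP (u + t *: v).
rewrite qf_shift // norm_shift // -/B -/k in H.
have Hu := hP u; rewrite (unit_of hu) mulr1 in Hu.
have Hn : t^+2 * (L - k) <= t^+2 * `|L - k| by rewrite ler_wpM2l ?sqr_ge0 ?ler_norm.
have f1 := congr1 (fun y => t * y) hB.
simpl in f1; rewrite /d in f1.
have Hp : 0 <= t^+2 * `|L - k| by rewrite mulr_ge0 ?sqr_ge0.
have ht : t^+2 <= 0 by lra.
have t0 : t = 0.
  by apply/eqP; rewrite -sqrf_eq0 eq_le ht sqr_ge0.
by rewrite hB t0 mul0r.
Qed.

Lemma S_spec (S : M2) (L : R) (u v : V2) :
  (u^T*m u) 0 0 = 1 -> (v^T *m v) 0 0 = 1 -> (u^T *m v) 0 0 = 0 -> S 0 1 = S 1 0 ->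
  qf S u = L -> bil S u v = 0 -> is_spec S (L, qf S v, u, v).
Proof.
move=> hu hv huv hs hL hB.
have [f1 f2 f3 _] := frameC hu hv huv.
split => //; split => //; split => //.
move: hu hv huv hL hB; rewrite !dotE !qfE /bil hs => g1 g2 g3 hL hB.
set k2 := v 0 0 * _ + _.
set a := u 0 0 in f1 f2 f3 g1 g2 g3 hL hB k2 *; set b := u 1 0 in f1 f2 f3 g1 g2 g3 hL hB k2 *.
set c := v 0 0 in f1 f2 f3 g1 g2 g3 hL hB k2 *; set d := v 1 0 in f1 f2 f3 g1 g2 g3 hL hB k2 *.
set p := S 0 0 in hL hB k2 *; set q := S 1 0 in hs hL hB k2 *; set r := S 1 1 in hL hB k2 *.
have Y0 : p * a + q * b = L * a.
  have e1 := congr1 (fun y => (p * a + q * b) * y) f1.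
  have e2 := congr1 (fun y => (q * a + r * b) * y) f3.
  have e3 := congr1 (fun y => a * y) hL.
  have e4 := congr1 (fun y => c * y) hB.
  simpl in *; rewrite !expr2 in e1 e2 *; lra.
have Y1 : q * a + r * b = L * b.
  have e1 := congr1 (fun y => (q * a + r * b) * y) f2.
  have e2 := congr1 (fun y => (p * a + q * b) * y) f3.
  have e3 := congr1 (fun y => b * y) hL.
  have e4 := congr1 (fun y => d * y) hB.
  simpl in *; rewrite !expr2 in e1 e2 *; lra.
have Z0 : p * c + q * d = k2 * c.
  have e1 := congr1 (fun y => (p * c + q * d) * y) f1.
  have e2 := congr1 (fun y => (q * c + r * d) * y) f3.
  have e4 := congr1 (fun y => a * y) hB.
  simpl in *; rewrite /k2 !expr2 in e1 e2 *; lra.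
have Z1 : q * c + r * d = k2 * d.
  have e1 := congr1 (fun y => (q * c + r * d) * y) f2.
  have e2 := congr1 (fun y => (p * c + q * d) * y) f3.
  have e4 := congr1 (fun y => b * y) hB.
  simpl in *; rewrite /k2 !expr2 in e1 e2 *; lra.
apply: mat2P; rewrite !specE -/a -/b -/c -/d -/p -?hs -/q -/r.
- have e1 := congr1 (fun y => p * y) f1.
  have e2 := congr1 (fun y => q * y) f3.
  have e3 := congr1 (fun y => a * y) Y0.
  have e4 := congr1 (fun y => c * y) Z0.
  simpl in *; rewrite !expr2 in e1 *; lra.
- have e1 := congr1 (fun y => q * y) f2.
  have e2 := congr1 (fun y => p * y) f3.
  have e3 := congr1 (fun y => b * y) Y0.
  have e4 := congr1 (fun y => d * y) Z0.
  simpl in *; rewrite !expr2 in e1 *; lra.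
- have e1 := congr1 (fun y => q * y) f1.
  have e2 := congr1 (fun y => r * y) f3.
  have e3 := congr1 (fun y => a * y) Y1.
  have e4 := congr1 (fun y => c * y) Z1.
  simpl in *; rewrite !expr2 in e1 *; lra.
- have e1 := congr1 (fun y => r * y) f2.
  have e2 := congr1 (fun y => q * y) f3.
  have e3 := congr1 (fun y => b * y) Y1.
  have e4 := congr1 (fun y => d * y) Z1.
  simpl in *; rewrite !expr2 in e1 *; lra.
Qed.

End Aux5.

Section Aux6.
Variable R : realType.
Local Open Scope classical_set_scope.
Local Open Scope ring_scope.
Local Notation M2 := 'M[R]_2.
Local Notation V2 := 'cV[R]_2.

Lemma supLE_sym (Xs : seq M2) m : supLE_seq Xs m 0 1 = supLE_seq Xs m 1 0.
Proof. by rewrite /supLE_seq !mxE /logm funcalc_sym. Qed.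

Lemma S_sym (Xs : seq M2) S : is_supLE Xs S -> S 0 1 = S 1 0.
Proof.
move=> hS.
have e01 : (fun m => supLE_seq Xs m 0 1) = (fun m => supLE_seq Xs m 1 0).
  by apply: funext => m; exact: supLE_sym.
have h1 := hS 0 1; rewrite e01 in h1.
have h2 := hS 1 0.
have h3 : (fun m => supLE_seq Xs m 1 0 - supLE_seq Xs m 1 0) @ \oo --> S 0 1 - S 1 0.
  by apply: cvgD => //; apply: cvgN.
have l1 := lim_lb (c := 0) (K := 0) h3.
have l2 := lim_ub (c := 0) (K := 0) h3.
have i1 : 0 <= S 0 1 - S 1 0 by apply: l1 => m _; rewrite subrr mul0r addr0.
have i2 : S 0 1 - S 1 0 <= 0 by apply: l2 => m _; rewrite subrr mul0r addr0.
lra.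
Qed.

Lemma qfB (A B : M2) x : qf (A - B) x = qf A x - qf B x.
Proof. by rewrite !qfE !mxE; ring. Qed.

Lemma sym_of (A : M2) : A 0 1 = A 1 0 -> sym2 A.
Proof. by move=> h; apply: mat2P; rewrite !mxE. Qed.

Lemma pair_lb (Xs : seq M2) (S : M2) (L lam : R) (u y : V2) :
  is_supLE Xs S -> (u^T *m u) 0 0 = 1 -> (y^T *m y) 0 0 = 1 -> Dt u y != 0 -> lam <= L ->
  (forall m, (0 < m)%N -> forall e : 'cV[R]_2,
     expR (m%:R * L) * ((u^T *m e) 0 0)^+2 + expR (m%:R * lam) * ((y^T *m e) 0 0)^+2
       <= qf (Mm Xs m) e) ->
  forall x : 'cV[R]_2, lam * (x 0 0 ^+ 2 + x 1 0 ^+ 2) <= qf S x.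
Proof.
move=> hS hu hy hD hl hb x.
apply: (core_lb (K := (Dt u y)^+2 / 2)) => //.
  by rewrite divr_gt0 // lt_neqAle eq_sym sqrf_eq0 hD sqr_ge0.
move=> m m0 e he.
apply: le_trans (hb m m0 e).
have h1 := nonpar hu hy he.
have hE : expR (m%:R * lam) <= expR (m%:R * L) by rewrite ler_expR ler_wpM2l.
have hE0 : 0 < expR (m%:R * lam) := expR_gt0 _.
set U := ((u^T *m e) 0 0)^+2; set Y := ((y^T *m e) 0 0)^+2.
have U0 : 0 <= U by rewrite sqr_ge0.
have t1 : expR (m%:R * lam) * U <= expR (m%:R * L) * U by rewrite ler_wpM2r.
have t2 : expR (m%:R * lam) * ((Dt u y)^+2 / 2) <= expR (m%:R * lam) * (U + Y).
  by rewrite ler_pM2l.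
rewrite mulrC; lra.
Qed.

End Aux6.


End Lemma8Helpers.
Import Lemma8Helpers.
Unset Implicit Arguments. Set Strict Implicit.

Theorem lemma8 (R : realType) (Xs : seq 'M[R]_2) (S : 'M[R]_2) :
  (forall X, X \in Xs -> sym2 X) ->
  (forall X, X \in Xs -> forall t : R, root (char_poly X) t -> 0 <= t) ->
  lemma7_hyp Xs ->
  is_supLE Xs S ->
  forall p : R, 0 < p -> upper_cone_p p Xs S.
Proof.
move=> hsym hnn [L [l2 [hL1 [hLmax _]]]] hS p hp.
have symE : forall X, X \in Xs -> X 0 1 = X 1 0.
  by move=> X /hsym h; rewrite -{1}h mxE.
have eigs : forall X, X \in Xs -> forall al be w z, is_spec X (al, be, w, z) ->
    [/\ 0 <= al, al <= L, 0 <= be & be <= L].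
  move=> X hX al be w z hs.
  have ra : root (char_poly X) al by rewrite (spec_root _ hs) eqxx.
  have rb : root (char_poly X) be by rewrite (spec_root _ hs) eqxx orbT.
  split; [exact: hnn X hX _ ra | apply: hLmax; exact: eig_in hX ra
         | exact: hnn X hX _ rb | apply: hLmax; exact: eig_in hX rb].
have [X1 hX1 hr1] : exists2 X, X \in Xs & root (char_poly X) L.
  by apply: eig_ex; rewrite /is_eig hL1.
have [a [u [v hs1]]] : exists a u v, is_spec X1 (L, a, u, v).
  have [[[[a0 b0] w0] z0] hs0] := spec_exists (symE X1 hX1).
  rewrite (spec_root _ hs0) in hr1.
  case/orP: hr1 => /eqP e.
    by exists b0, w0, z0; rewrite e.
  by exists a0, z0, w0; rewrite e; apply: spec_swap.
have [L0 _ a0 aL] := eigs X1 hX1 _ _ _ _ hs1.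
case: (hs1) => hu [hv [huv _]].
have [_ _ _ hD1] := frameC hu hv huv.
have Fge0 : forall m : nat, forall e : 'cV[R]_2, forall X, X \in Xs -> 0 <= qf (expm (m%:R *: X)) e.
  move=> m e X hX; have [[[[al be] w z] hs] ] := spec_exists (symE X hX).
  by rewrite (exp_qf _ _ hs) addr_ge0 // mulr_ge0 ?expR_ge0 ?sqr_ge0.
have MmE : forall m e, qf (Mm Xs m) e = \sum_(X <- Xs) qf (expm (m%:R *: X)) e.
  by move=> m e; rewrite /Mm qf_sum.
have F1E : forall (m : nat) e, qf (expm (m%:R *: X1)) e =
    expR (m%:R * L) * ((u^T *m e) 0 0)^+2 + expR (m%:R * a) * ((v^T *m e) 0 0)^+2.
  by move=> m e; rewrite (exp_qf _ _ hs1).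
have Mge1 : forall (m : nat) (e : 'cV[R]_2),
    expR (m%:R * L) * ((u^T *m e) 0 0)^+2 + expR (m%:R * a) * ((v^T *m e) 0 0)^+2
    <= qf (Mm Xs m) e.
  by move=> m e; rewrite MmE -F1E; apply: sum_ge_one => // X hX; apply: Fge0.
have Mpos : forall m, (0 < m)%N -> forall e : 'cV[R]_2, e 0 0 ^+ 2 + e 1 0 ^+ 2 = 1 ->
    0 < qf (Mm Xs m) e.
  move=> m m0 e he; apply: lt_le_trans (Mge1 m e).
  have c := frame_compl e hu hv huv; rewrite he in c.
  have g1 : 1 <= expR (m%:R * L).
    have := expR_ge1Dx (m%:R * L); have : 0 <= m%:R * L := mulr_ge0 (ler0n _ _) L0; lra.
  have g2 : 1 <= expR (m%:R * a).
    have := expR_ge1Dx (m%:R * a); have : 0 <= m%:R * a := mulr_ge0 (ler0n _ _) a0; lra.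
  set U := ((u^T *m e) 0 0)^+2 in c *; set V := ((v^T *m e) 0 0)^+2 in c *.
  have U0 : 0 <= U by rewrite sqr_ge0.
  have V0 : 0 <= V by rewrite sqr_ge0.
  have t1 : U <= expR (m%:R * L) * U by rewrite ler_peMl.
  have t2 : V <= expR (m%:R * a) * V by rewrite ler_peMl.
  lra.
have size0 : (0 < size Xs)%N by case: (Xs) hX1.
have P1 : forall x : 'cV[R]_2, qf S x <= L * (x 0 0 ^+ 2 + x 1 0 ^+ 2).
  move=> x; apply: (core_ub (K := (size Xs)%:R)) => //; first by rewrite ltr0n.
  move=> m m0 e he; split; first exact: Mpos.
  rewrite MmE; apply: sum_le_const => X hX.
  have [[[[al be] w z] hs]] := spec_exists (symE X hX).
  have [_ alL _ beL] := eigs X hX _ _ _ _ hs.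
  case: (hs) => hw [hz [hwz _]].
  have c := frame_compl e hw hz hwz; rewrite he in c.
  rewrite (exp_qf _ _ hs).
  have g1 : expR (m%:R * al) <= expR (m%:R * L) by rewrite ler_expR ler_wpM2l.
  have g2 : expR (m%:R * be) <= expR (m%:R * L) by rewrite ler_expR ler_wpM2l.
  set W := ((w^T *m e) 0 0)^+2 in c *; set Z := ((z^T *m e) 0 0)^+2 in c *.
  have W0 : 0 <= W by rewrite sqr_ge0.
  have Z0 : 0 <= Z by rewrite sqr_ge0.
  have t1 : expR (m%:R * al) * W <= expR (m%:R * L) * W by rewrite ler_wpM2r.
  have t2 : expR (m%:R * be) * Z <= expR (m%:R * L) * Z by rewrite ler_wpM2r.
  have : expR (m%:R * L) * W + expR (m%:R * L) * Z = expR (m%:R * L) by rewrite -mulrDr c mulr1.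
  lra.
have P2 : L <= qf S u.
  apply: (core_top hS hu); last exact: Mpos.
  move=> m m0 e; rewrite MmE.
  apply: le_trans (sum_ge_one (F := fun X => qf (expm (m%:R *: X)) e) hX1 (Fge0 m e)).
  by rewrite /= F1E lerDl mulr_ge0 ?expR_ge0 ?sqr_ge0.
have hsS := S_sym hS.
have hB := bil0 hu hv huv hsS P1 P2.
have hqu : qf S u = L by apply: le_anti; rewrite P2 andbT; have := P1 u; rewrite (unit_of hu) mulr1.
have specS := S_spec hu hv huv hsS hqu hB.
set k := qf S v in specS.
have P3a : a <= k.
  have := pair_lb hS hu hv _ aL _ v.
  rewrite (unit_of hv) mulr1; apply.
    by apply/eqP => h; move: hD1; rewrite /Dt in h; rewrite h expr2 mul0r => /eqP; rewrite eq_sym oner_eq0.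
  by move=> m m0 e; apply: Mge1.
have hkL : k <= L by have := P1 v; rewrite (unit_of hv) mulr1.
have k0 : 0 <= k by apply: le_trans a0 P3a.
have specP := spec_f (fun t => t `^ p) specS.
have lowb : forall X al be w z, X \in Xs -> X != X1 -> is_spec X (al, be, w, z) ->
    (w^T *m w) 0 0 = 1 -> Dt u w != 0 -> al <= L ->
    (forall m e, expR (m%:R * al) * ((w^T *m e) 0 0)^+2 <= qf (expm (m%:R *: X)) e) ->
    al <= k.
  move=> X al be w z hX hne hs hw hDw alL hF.
  have := pair_lb hS hu hw hDw alL _ v; rewrite (unit_of hv) mulr1; apply.
  move=> m m0 e; rewrite MmE.
  apply: le_trans (sum_ge_two (F := fun X => qf (expm (m%:R *: X)) e) hX1 hX hne (Fge0 m e)).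
  rewrite /= F1E; apply: lerD; last exact: hF.
  by rewrite lerDl mulr_ge0 ?expR_ge0 ?sqr_ge0.
split.
  split; first exact: sym_of hsS.
  move=> x; change (0 <= qf S x); rewrite (spec_qf x specS).
  by rewrite addr_ge0 // mulr_ge0 // sqr_ge0.
split; first by apply: sym_of; exact: funcalc_sym.
move=> Z /mapP [X hX ->].
split.
  by apply: sym_of; rewrite !mxE (funcalc_sym _ S) (funcalc_sym _ X).
move=> x; change (0 <= qf (powm S p - powm X p) x); rewrite qfB subr_ge0.
rewrite /powm (spec_qf x specP) /=.
case: (eqVneq X X1) => [->|hne].
  rewrite (spec_qf x (spec_f (fun t => t `^ p) hs1)) /=.
  apply: final_cmp => //.
  by rewrite /Dt mulrC subrr eqxx.
have [[[[al be] w z] hs]] := spec_exists (symE X hX).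
have [al0 alL be0 beL] := eigs X hX _ _ _ _ hs.
case: (hs) => hw [hz [hwz _]].
rewrite (spec_qf x (spec_f (fun t => t `^ p) hs)) /=.
apply: final_cmp => //.
  move=> hDw; apply: (lowb X al be w z) => // m e.
  by rewrite (exp_qf _ _ hs) lerDl mulr_ge0 ?expR_ge0 ?sqr_ge0.
move=> hDz; apply: (lowb X be al z w) => //; first exact: spec_swap.
move=> m e.
by rewrite (exp_qf _ _ hs) lerDr mulr_ge0 ?expR_ge0 ?sqr_ge0.
Qed.
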